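(* Let $n\ge 1$, $k\ge 1$ be integers, $d=\gcd(k,n)$, $n=td$, let $\lambda\in\mathbb{F}_{2^n}^*$ and $f(x)=Tr(\lambda x^{2^k+1})$ for $x\in\mathbb{F}_{2^n}$. Then $f$ is negabent if and only if $\lambda$ cannot be written as $$\frac{v_0^{2^{2k}+1}}{(v_0+v_1)^{2^k+1}}$$ for some $v_0\in\mathbb{F}_{2^n}\setminus\mathbb{F}_{2^d}$ with $v_1=v_0^{2^k}$.
   Context: $Tr=Tr_1^n:\mathbb{F}_{2^n}\to\mathbb{F}_2$ is the absolute trace. Fix a self-dual basis $\{\alpha_1,\dots,\alpha_n\}$ of $\mathbb{F}_{2^n}$ over $\mathbb{F}_2$ (i.e. $Tr(\alpha_i\alpha_j)=\delta_{ij}$) and identify $x=\sum x_i\alpha_i$ with $(x_1,\dots,x_n)\in\mathbb{F}_2^n$; let $wt(x)$ be the number of nonzero coordinates. For $f:\mathbb{F}_{2^n}\to\mathbb{F}_2$, $\mathcal{N}_f(\mu)=2^{-n/2}\sum_{x}(-1)^{f(x)+Tr(\mu x)}\,\mathrm{i}^{wt(x)}$ ($\mathrm{i}=\sqrt{-1}$), and $f$ is negabent if $|\mathcal{N}_f(\mu)|=1$ for all $\mu\in\mathbb{F}_{2^n}$. *)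

(* Defs.v *)
From HB Require Import structures.
From mathcomp Require Import all_boot all_order all_algebra all_field.
Set Implicit Arguments. Unset Strict Implicit. Unset Printing Implicit Defensive.
Import Order.TTheory GRing.Theory Num.Theory.
Local Open Scope ring_scope.

(* Absolute trace Tr_1^n : F_{2^n} -> F_2, with values in the prime subfield
   {0,1} of F. *)
Definition Tr (F : finFieldType) (n : nat) (x : F) : F :=
  \sum_(i < n) x ^+ (2 ^ i).

Definition self_dual (F : finFieldType) (n : nat) (alpha : 'I_n -> F) : Prop :=
  forall i j : 'I_n, Tr n (alpha i * alpha j) = (i == j)%:R.

Definition vec_of (F : finFieldType) (n : nat) (alpha : 'I_n -> F)
  (c : {ffun 'I_n -> bool}) : F := \sum_(i < n) (c i)%:R * alpha i.

Definition wt (n : nat) (c : {ffun 'I_n -> bool}) : nat := #|[pred i | c i]|.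

(* Nega-Hadamard transform, the sum over x in F_{2^n} being taken over its
   coordinate vectors (x_1,...,x_n) in F_2^n w.r.t. alpha.  The exponent of
   (-1) is f(x) + Tr(mu x), an element of F_2 (embedded in F). *)
Definition nega_transform (F : finFieldType) (n : nat) (alpha : 'I_n -> F)
  (f : F -> F) (mu : F) : algC :=
  (sqrtC (2%:R ^+ n))^-1 *
  \sum_(c : {ffun 'I_n -> bool})
     (-1) ^+ (f (vec_of alpha c) + Tr n (mu * vec_of alpha c) != 0)
     * 'i ^+ wt c.

Definition negabent (F : finFieldType) (n : nat) (alpha : 'I_n -> F)
  (f : F -> F) : Prop :=
  forall mu : F, `|nega_transform alpha f mu| = 1.

(* Main.v *)
Require Import Defs.
From HB Require Import structures.
From mathcomp Require Import all_boot all_order all_algebra all_field.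
From mathcomp Require Import ring.
Import Order.TTheory GRing.Theory Num.Theory.
Local Open Scope ring_scope.
Set Implicit Arguments. Unset Strict Implicit. Unset Printing Implicit Defensive.

Lemma two0 (F : finFieldType) (hc : 2%N \in [pchar F]) : (2%:R : F) = 0.
Proof. exact: pcharf0 hc. Qed.

Lemma char2E (F : finFieldType) (hc : 2%N \in [pchar F]) (x y z : F) :
  x = y + 2%:R * z -> x = y.
Proof. by rewrite two0 // mul0r addr0. Qed.

Lemma frD (F : finFieldType) (hc : 2%N \in [pchar F]) m (x y : F) :
  (x + y) ^+ (2 ^ m) = x ^+ (2 ^ m) + y ^+ (2 ^ m).
Proof.
elim: m => [|m IH]; first by rewrite !expr1.
rewrite expnSr !exprM IH sqrrD.
by rewrite mulr2n addrr_pchar2 // addr0.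
Qed.

Lemma fr0 (F : finFieldType) m : (0 : F) ^+ (2 ^ m) = 0.
Proof. by rewrite expr0n expn_eq0. Qed.

Lemma frsum (F : finFieldType) (hc : 2%N \in [pchar F]) m (I : finType) (G : I -> F) :
  (\sum_i G i) ^+ (2 ^ m) = \sum_i G i ^+ (2 ^ m).
Proof. exact: (big_morph _ (frD hc m) (fr0 _ m)). Qed.

Lemma frcard (F : finFieldType) n (hcard : #|F| = (2 ^ n)%N) j (x : F) :
  x ^+ (2 ^ (n * j)) = x.
Proof.
elim: j => [|j IH]; first by rewrite muln0 expr1.
by rewrite mulnS expnD exprM -hcard expf_card IH.
Qed.

Lemma TrD (F : finFieldType) (hc : 2%N \in [pchar F]) n (x y : F) :
  Tr n (x + y) = Tr n x + Tr n y.
Proof. by rewrite /Tr -big_split; apply: eq_bigr => i _; rewrite frD. Qed.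

Lemma Tr0 (F : finFieldType) n : Tr n (0 : F) = 0.
Proof. by rewrite /Tr big1 // => i _; rewrite fr0. Qed.

Lemma TrSum (F : finFieldType) (hc : 2%N \in [pchar F]) n (I : finType) (G : I -> F) :
  Tr n (\sum_i G i) = \sum_i Tr n (G i).
Proof.
rewrite /Tr exchange_big /=; apply: eq_bigr => i _.
by rewrite frsum.
Qed.

Lemma Trscal (F : finFieldType) n (b : bool) (y : F) :
  Tr n (b%:R * y) = b%:R * Tr n y.
Proof. by case: b; rewrite ?mul1r ?mul0r ?Tr0. Qed.

Lemma Tr2 (F : finFieldType) n (hn : (0 < n)%N) (hcard : #|F| = (2 ^ n)%N) (x : F) :
  Tr n (x ^+ 2) = Tr n x.
Proof.
case: n hn hcard => // n _ hcard.
rewrite /Tr big_ord_recr big_ord_recl /= -exprM -expnS.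
rewrite -hcard expf_card addrC; congr (_ + _).
by apply: eq_bigr => i _; rewrite -exprM -expnS.
Qed.

Lemma TrX (F : finFieldType) n (hn : (0 < n)%N) (hcard : #|F| = (2 ^ n)%N) m (x : F) :
  Tr n (x ^+ (2 ^ m)) = Tr n x.
Proof.
elim: m => [|m IH]; first by rewrite expr1.
by rewrite expnSr exprM Tr2.
Qed.

Lemma Trbit (F : finFieldType) (hc : 2%N \in [pchar F]) n (hn : (0 < n)%N)
  (hcard : #|F| = (2 ^ n)%N) (x : F) : Tr n x = 0 \/ Tr n x = 1.
Proof.
have h : Tr n x ^+ 2 = Tr n x.
  by rewrite -{2}(Tr2 hn hcard) {1}/Tr (frsum hc 1) /Tr; apply: eq_bigr => i _; rewrite -!exprM mulnC.
have : Tr n x * (Tr n x - 1) = 0 by rewrite mulrBr mulr1 -expr2 h subrr.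
by move/eqP; rewrite mulf_eq0 subr_eq0 => /orP[/eqP|/eqP]; [left|right].
Qed.

Definition sg (F : finFieldType) (t : F) : algC := (-1) ^+ (t != 0).
Definition bit (F : finFieldType) (t : F) := t = 0 \/ t = 1.

Lemma sgD (F : finFieldType) (hc : 2%N \in [pchar F]) (t s : F) :
  bit t -> bit s -> sg (t + s) = sg t * sg s /\ bit (t + s).
Proof.
rewrite /sg /bit => [[]->[]->]; rewrite ?addr0 ?add0r ?eqxx ?oner_eq0 ?expr0 ?expr1 ?mul1r ?mulr1;
  try by split; auto.
by rewrite addrr_pchar2 // eqxx mulrNN mulr1; split; auto.
Qed.

Definition chi (F : finFieldType) n (x : F) : algC := sg (Tr n x).

Lemma chiD (F : finFieldType) (hc : 2%N \in [pchar F]) n (hn : (0 < n)%N)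
  (hcard : #|F| = (2 ^ n)%N) (x y : F) : chi n (x + y) = chi n x * chi n y.
Proof.
rewrite /chi TrD //.
have [h _] := sgD hc (Trbit hc hn hcard x) (Trbit hc hn hcard y); exact h.
Qed.

Lemma chi0 (F : finFieldType) n : chi n (0 : F) = 1.
Proof. by rewrite /chi Tr0 /sg eqxx. Qed.

Lemma chiX (F : finFieldType) n (hn : (0 < n)%N) (hcard : #|F| = (2 ^ n)%N) m (x : F) :
  chi n (x ^+ (2 ^ m)) = chi n x.
Proof. by rewrite /chi TrX. Qed.

Lemma sg_conj (F : finFieldType) (t : F) : (sg t)^* = sg t.
Proof. by rewrite /sg rmorphXn rmorphN1. Qed.

Lemma sg_neq0 (F : finFieldType) (t : F) : sg t != 0.
Proof. by rewrite /sg signr_eq0. Qed.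

Lemma Tr_vec (F : finFieldType) (hc : 2%N \in [pchar F]) n (alpha : 'I_n -> F)
  (hsd : self_dual alpha) j c : Tr n (alpha j * vec_of alpha c) = (c j)%:R.
Proof.
rewrite /vec_of mulr_sumr TrSum //.
rewrite (bigD1 j) //= big1 => [|i hij].
  by rewrite addr0 mulrCA Trscal hsd eqxx mulr1.
by rewrite mulrCA Trscal hsd eq_sym (negbTE hij) mulr0.
Qed.

Lemma vec_inj (F : finFieldType) (hc : 2%N \in [pchar F]) n (alpha : 'I_n -> F)
  (hsd : self_dual alpha) : injective (vec_of alpha).
Proof.
move=> c c' h; apply/ffunP => j.
have := Tr_vec hc hsd j c; rewrite h Tr_vec //.
by case: (c j); case: (c' j) => // /eqP; rewrite ?oner_eq0 // eq_sym oner_eq0.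
Qed.

Lemma vec_bij (F : finFieldType) (hc : 2%N \in [pchar F]) n (hcard : #|F| = (2 ^ n)%N)
  (alpha : 'I_n -> F) (hsd : self_dual alpha) : bijective (vec_of alpha).
Proof.
apply: inj_card_bij; first exact: vec_inj.
by rewrite card_ffun card_bool card_ord hcard.
Qed.

Lemma vec0 (F : finFieldType) n (alpha : 'I_n -> F) : vec_of alpha [ffun=> false] = 0.
Proof. by rewrite /vec_of big1 // => i _; rewrite ffunE mul0r. Qed.

Lemma vecX (F : finFieldType) (hc : 2%N \in [pchar F]) n (alpha : 'I_n -> F) (c e : {ffun 'I_n -> bool}) :
  vec_of alpha [ffun j => c j (+) e j] = vec_of alpha c + vec_of alpha e.
Proof.
rewrite /vec_of -big_split; apply: eq_bigr => i _; rewrite ffunE.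
by case: (c i); case: (e i); rewrite /= ?mul1r ?mul0r ?addr0 ?add0r ?addrr_pchar2.
Qed.

Lemma sum_vec (F : finFieldType) (hc : 2%N \in [pchar F]) n (hcard : #|F| = (2 ^ n)%N)
  (alpha : 'I_n -> F) (hsd : self_dual alpha) (G : F -> algC) :
  \sum_c G (vec_of alpha c) = \sum_x G x.
Proof.
by rewrite (reindex (vec_of alpha)) //; apply: onW_bij; exact: vec_bij.
Qed.

Lemma orth (F : finFieldType) (hc : 2%N \in [pchar F]) n (hn : (0 < n)%N)
  (hcard : #|F| = (2 ^ n)%N) (alpha : 'I_n -> F) (hsd : self_dual alpha) (w : F) :
  \sum_(x : F) chi n (x * w) = if w == 0 then (2 ^ n)%:R else 0.
Proof.
case: eqP => [->|/eqP nz].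
  under eq_bigr do rewrite mulr0 chi0.
  by rewrite sumr_const hcard.
have -> : \sum_(x : F) chi n (x * w) = \sum_(x : F) chi n x.
  by rewrite [RHS](reindex_inj (mulIf nz)).
set y := alpha (Ordinal hn) * alpha (Ordinal hn).
have hy : chi n y = -1.
  by rewrite /chi /y hsd eqxx /sg oner_eq0 expr1.
set S := \sum_(x : F) chi n x.
have : S = - S.
  rewrite {1}/S (reindex_inj (addrI y)) /=.
  under eq_bigr do rewrite chiD // hy mulN1r.
  by rewrite sumrN.
move/eqP; rewrite -subr_eq0 opprK -mulr2n -mulr_natr mulf_eq0 pnatr_eq0 orbF.
by move/eqP.
Qed.

Lemma weightE n (z : algC) (c : {ffun 'I_n -> bool}) :
  z ^+ wt c = \prod_j (if c j then z else 1).
Proof. by rewrite /wt -prodr_const big_mkcond. Qed.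

Lemma Tr_vv (F : finFieldType) (hc : 2%N \in [pchar F]) n (alpha : 'I_n -> F)
  (hsd : self_dual alpha) (c e : {ffun 'I_n -> bool}) :
  Tr n (vec_of alpha c * vec_of alpha e) = \sum_j ((c j && e j) : bool)%:R.
Proof.
rewrite {1}/vec_of mulr_suml TrSum //; apply: eq_bigr => i _.
by rewrite -mulrA Trscal Tr_vec //; case: (c i); case: (e i); rewrite ?mul1r ?mul0r.
Qed.

Lemma chi_vv (F : finFieldType) (hc : 2%N \in [pchar F]) n (alpha : 'I_n -> F)
  (hsd : self_dual alpha) (c e : {ffun 'I_n -> bool}) :
  chi n (vec_of alpha c * vec_of alpha e) = \prod_j (-1) ^+ (c j && e j).
Proof.
rewrite /chi Tr_vv //.
pose Q (t : F) (z : algC) := bit t /\ sg t = z.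
suff [] : Q (\sum_j ((c j && e j) : bool)%:R) (\prod_j (-1) ^+ (c j && e j)) by [].
apply: (big_ind2 Q).
- by split; [left|rewrite /sg eqxx].
- move=> t1 z1 t2 z2 [b1 <-] [b2 <-].
  by have [h1 h2] := sgD hc b1 b2; split.
- move=> j _; case: (c j && e j); split; rewrite /bit /sg ?eqxx ?oner_eq0 //; auto.
Qed.

Lemma wpair (F : finFieldType) (hc : 2%N \in [pchar F]) n (alpha : 'I_n -> F)
  (hsd : self_dual alpha) (c e : {ffun 'I_n -> bool}) :
  'i ^+ wt c * ('i ^+ wt [ffun j => c j (+) e j])^* =
  (- 'i) ^+ wt e * chi n (vec_of alpha c * vec_of alpha e).
Proof.
rewrite chi_vv // !weightE rmorph_prod -!big_split /=; apply: eq_bigr => j _.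
rewrite ffunE; case: (c j); case: (e j);
  rewrite /= ?rmorph1 ?conjCi ?mulr1 ?mul1r ?expr0 ?expr1 //.
- by rewrite mulrN1 opprK.
- by rewrite mulrN -expr2 sqrCi opprK.
Qed.

Lemma gdiff (F : finFieldType) (hc : 2%N \in [pchar F]) n (hn : (0 < n)%N)
  (hcard : #|F| = (2 ^ n)%N) k (lam mu x a : F) :
  chi n (lam * x ^+ (2 ^ k + 1) + mu * x) * chi n (lam * (x + a) ^+ (2 ^ k + 1) + mu * (x + a))
  = chi n (x * ((lam * a) ^+ (2 ^ (n * k - k)) + lam * a ^+ (2 ^ k)))
    * chi n (lam * a ^+ (2 ^ k + 1) + mu * a).
Proof.
rewrite -chiD //.
have -> : lam * x ^+ (2 ^ k + 1) + mu * x + (lam * (x + a) ^+ (2 ^ k + 1) + mu * (x + a))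
  = x * (lam * a ^+ (2 ^ k)) + (lam * a) * x ^+ (2 ^ k) + (lam * a ^+ (2 ^ k + 1) + mu * a).
  rewrite !addn1 !exprS frD //.
  apply: (char2E hc (z := lam * (x * x ^+ (2 ^ k)) + mu * x)); ring.
have key : chi n (lam * a * x ^+ (2 ^ k)) = chi n (x * (lam * a) ^+ (2 ^ (n * k - k))).
  rewrite -(chiX hn hcard (n * k - k)) exprMn -exprM -expnD.
  have -> : (k + (n * k - k))%N = (n * k)%N by rewrite subnKC // leq_pmull.
  by rewrite (frcard hcard) mulrC.
rewrite !chiD // key mulrDr chiD //; congr (_ * _); exact: mulrC.
Qed.

Definition Wf (F : finFieldType) n k (lam a : F) :=
  (lam * a) ^+ (2 ^ (n * k - k)) + lam * a ^+ (2 ^ k) + a.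

Lemma chi_conj (F : finFieldType) n (x : F) : (chi n x)^* = chi n x.
Proof. exact: sg_conj. Qed.

Lemma sqN (F : finFieldType) (hc : 2%N \in [pchar F]) n (hn : (0 < n)%N)
  (hcard : #|F| = (2 ^ n)%N) (alpha : 'I_n -> F) (hsd : self_dual alpha) k (lam mu : F) :
  `|nega_transform alpha (fun x => Tr n (lam * x ^+ (2 ^ k + 1))) mu| ^+ 2 =
  \sum_(e : {ffun 'I_n -> bool}) (if Wf n k lam (vec_of alpha e) == 0 then
     (- 'i) ^+ wt e * chi n (lam * vec_of alpha e ^+ (2 ^ k + 1) + mu * vec_of alpha e)
     else 0).
Proof.
set v := vec_of alpha.
have n2 : (2 ^ n)%:R != 0 :> algC by rewrite pnatr_eq0 expn_eq0.
have hs : `|sqrtC (2 ^+ n)| = sqrtC (2 ^+ n) :> algC.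
  by apply/normr_idP; rewrite sqrtC_ge0 exprn_ge0 // ler0n.
rewrite /nega_transform normrM normfV hs exprMn exprVn sqrtCK normCK -natrX.
set S := \sum_c _.
have hS : S = \sum_c chi n (lam * v c ^+ (2 ^ k + 1) + mu * v c) * 'i ^+ wt c.
  by apply: eq_bigr => c _; rewrite /chi TrD.
pose K (e : {ffun 'I_n -> bool}) :=
  (- 'i) ^+ wt e * chi n (lam * v e ^+ (2 ^ k + 1) + mu * v e).
have -> : S * S^* = \sum_e K e * (if Wf n k lam (v e) == 0 then (2 ^ n)%:R else 0).
  rewrite hS rmorph_sum mulr_suml.
  transitivity (\sum_c \sum_e chi n (v c * Wf n k lam (v e)) * K e).
    apply: eq_bigr => c _; rewrite mulr_sumr.
    rewrite (reindex_inj (h := fun e : {ffun 'I_n -> bool} => [ffun j => c j (+) e j])) /=; last first.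
      move=> e1 e2 /ffunP h; apply/ffunP => j; have := h j; rewrite !ffunE.
      exact: addbI.
    apply: eq_bigr => e _.
    rewrite rmorphM /= chi_conj /v vecX // -/v.
    rewrite mulrACA gdiff // (wpair hc hsd) -/v /K /Wf.
    set T := chi n (lam * v e ^+ (2 ^ k + 1) + mu * v e).
    rewrite (mulrDr (v c) (_ + _) (v e)) chiD //.
    set A := chi n (v c * _); set B := chi n (v c * v e).
    rewrite -!mulrA; congr (_ * _); rewrite mulrCA [RHS]mulrCA; congr (_ * _); exact: mulrC.
  rewrite exchange_big /=; apply: eq_bigr => e _.
  rewrite -mulr_suml mulrC; congr (_ * _).
  by rewrite (sum_vec hc hcard hsd (fun x => chi n (x * Wf n k lam (v e)))) (orth hc hn hcard hsd).
rewrite mulr_sumr; apply: eq_bigr => e _.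
by case: eqP => _; rewrite ?mulr0 // mulrCA mulVf // mulr1.
Qed.

Lemma Wf0 (F : finFieldType) n k (lam : F) : Wf n k lam 0 = 0.
Proof. by rewrite /Wf mulr0 fr0 expr0n expn_eq0 /= mulr0 !addr0. Qed.

Lemma negA (F : finFieldType) (hc : 2%N \in [pchar F]) n (hn : (0 < n)%N)
  (hcard : #|F| = (2 ^ n)%N) (alpha : 'I_n -> F) (hsd : self_dual alpha) k (lam : F) :
  (forall a, Wf n k lam a = 0 -> a = 0) ->
  negabent alpha (fun x => Tr n (lam * x ^+ (2 ^ k + 1))).
Proof.
move=> hW mu.
have h2 : `|nega_transform alpha (fun x => Tr n (lam * x ^+ (2 ^ k + 1))) mu| ^+ 2 = 1.
  rewrite (sqN hc hn hcard hsd) (bigD1 [ffun=> false]) //= vec0 Wf0 eqxx big1 => [|e he].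
    have -> : wt ([ffun=> false] : {ffun 'I_n -> bool}) = 0%N.
      by rewrite /wt; apply: eq_card0 => i; rewrite !inE ffunE.

    by rewrite addr0 expr0n addn1 /= !mulr0 addr0 chi0 mulr1.
  case: eqP => // /hW h0; exfalso; move: he; apply/negP; rewrite negbK; apply/eqP.
  by apply: (vec_inj hc hsd); rewrite h0 vec0.
by apply/eqP; rewrite -(@sqrp_eq1 _ `|_|) ?normr_ge0 // h2.
Qed.

Lemma negB (F : finFieldType) (hc : 2%N \in [pchar F]) n (hn : (0 < n)%N)
  (hcard : #|F| = (2 ^ n)%N) (alpha : 'I_n -> F) (hsd : self_dual alpha) k (lam : F) :
  negabent alpha (fun x => Tr n (lam * x ^+ (2 ^ k + 1))) ->
  forall b, Wf n k lam b = 0 -> b = 0.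
Proof.
move=> hN b hb; apply/eqP; apply/negPn/negP => bnz.
set v := vec_of alpha.
have [vi vK viK] := vec_bij hc hcard hsd.
set eb := vi b.
have veb : v eb = b by rewrite /v /eb viK.
pose K' (e : {ffun 'I_n -> bool}) := (- 'i) ^+ wt e * chi n (lam * v e ^+ (2 ^ k + 1)).
have n2 : (2 ^ n)%:R != 0 :> algC by rewrite pnatr_eq0 expn_eq0.
have E1 : \sum_(mu : F) `|nega_transform alpha (fun x => Tr n (lam * x ^+ (2 ^ k + 1))) mu| ^+ 2
          * chi n (mu * b) = 0.
  under eq_bigr do rewrite hN expr1n mul1r.
  by rewrite (orth hc hn hcard hsd) (negbTE bnz).
have E2 : \sum_(mu : F) `|nega_transform alpha (fun x => Tr n (lam * x ^+ (2 ^ k + 1))) mu| ^+ 2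
          * chi n (mu * b) = K' eb * (2 ^ n)%:R.
  under eq_bigr do rewrite (sqN hc hn hcard hsd) mulr_suml.
  rewrite exchange_big /=.
  transitivity (\sum_(e : {ffun 'I_n -> bool})
     (if Wf n k lam (v e) == 0 then K' e * (if v e + b == 0 then (2 ^ n)%:R else 0) else 0)).
    apply: eq_bigr => e _.
    case: eqP => _; last by rewrite big1 // => mu _; rewrite mul0r.
    rewrite -(orth hc hn hcard hsd) mulr_sumr; apply: eq_bigr => mu _.
    rewrite /K' chiD // -!mulrA; congr (_ * _); congr (_ * _).
    by rewrite -chiD // mulrDr [mu * v e]mulrC [mu * b]mulrC.
  rewrite (bigD1 eb) //= veb hb eqxx addrr_pchar2 // eqxx big1 ?addr0 // => e he.
  case: eqP => // _; case: eqP => [|_]; last by rewrite mulr0.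
  move/eqP; rewrite addr_eq0 oppr_pchar2 // => /eqP hvb.
  by exfalso; move: he; rewrite -veb in hvb; rewrite (vec_inj hc hsd hvb) eqxx.
move: E2; rewrite E1 => /esym /eqP; rewrite mulf_eq0 (negbTE n2) orbF /K' mulf_eq0.
rewrite /chi (negbTE (sg_neq0 _)) orbF expf_eq0 oppr_eq0 (negbTE (neq0Ci _)) andbF.
by [].
Qed.

Lemma WfP (F : finFieldType) (hc : 2%N \in [pchar F]) n (hn : (0 < n)%N)
  (hcard : #|F| = (2 ^ n)%N) k (lam a : F) :
  Wf n k lam a ^+ (2 ^ k) =
  lam ^+ (2 ^ k) * (a ^+ (2 ^ k)) ^+ (2 ^ k) + a ^+ (2 ^ k) + lam * a.
Proof.
rewrite /Wf !frD // -exprM -expnD [(lam * a) ^+ _]exprMn.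
have -> : (n * k - k + k = n * k)%N by rewrite subnK // leq_pmull.
by rewrite !(frcard hcard) exprMn -addrA addrC.
Qed.

Lemma e2k k : (2 ^ (2 * k) = 2 ^ k * 2 ^ k)%N.
Proof. by rewrite mul2n -addnn expnD. Qed.

Lemma C2 (F : finFieldType) (hc : 2%N \in [pchar F]) k (lam v0 : F) (hl : lam != 0) :
  lam = v0 ^+ (2 ^ (2 * k) + 1) / (v0 + v0 ^+ (2 ^ k)) ^+ (2 ^ k + 1) ->
  exists a : F, a != 0 /\
    lam ^+ (2 ^ k) * (a ^+ (2 ^ k)) ^+ (2 ^ k) + a ^+ (2 ^ k) + lam * a = 0.
Proof.
rewrite e2k !addn1 !exprSr exprM.
set q := (2 ^ k)%N.
have q0 : (0 < q)%N by rewrite expn_gt0.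
move=> hlam.
have x0 : v0 != 0.
  apply: contraNneq hl => h0; rewrite hlam h0 expr0n; rewrite gtn_eqF //.
  by rewrite mulr0 mul0r.
have u0 : v0 + v0 ^+ q != 0.
  apply: contraNneq hl => h0; rewrite hlam h0 mulr0 invr0 mulr0 //.
set X := v0 ^+ q in hlam u0 *.
set Y := X ^+ q in hlam *.
have hXY : (v0 + X) ^+ q = X + Y by rewrite frD.
rewrite hXY in hlam.
have X0 : X != 0 by rewrite expf_neq0.
have Y0 : Y != 0 by rewrite expf_neq0.
have XY0 : X + Y != 0 by rewrite -hXY expf_neq0.
have YZ0 : Y + Y ^+ q != 0 by rewrite -frD // expf_neq0.
exists ((v0 + X) / (v0 * X)); split.
  by rewrite mulf_neq0 // invr_eq0 mulf_neq0.
rewrite !expr_div_n !exprMn !frD // hlam !expr_div_n !exprMn !frD // -/q -/X -/Y -/X -/Y.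
set Z := Y ^+ q in YZ0 *.
apply: (char2E hc (z := (X ^+ 2 + X * Y + Y ^+ 2) / (X * Y * (X + Y)))).
rewrite add0r; field.
by rewrite XY0 Y0 X0 x0 u0 YZ0 expf_neq0.
Qed.

Lemma sqD (F : finFieldType) (hc : 2%N \in [pchar F]) (x y : F) :
  (x + y) ^+ 2 = x ^+ 2 + y ^+ 2.
Proof. by rewrite sqrrD mulr2n addrr_pchar2 // addr0. Qed.

Lemma sq_inj (F : finFieldType) (hc : 2%N \in [pchar F]) (x y : F) :
  x ^+ 2 = y ^+ 2 -> x = y.
Proof.
move=> h; have : (x + y) ^+ 2 = 0 by rewrite sqD // h addrr_pchar2.
move/eqP; rewrite expf_eq0 /= addr_eq0 oppr_pchar2 //; exact: eqP.
Qed.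

Lemma iterd (F : finFieldType) d k (x : F) : (d %| k)%N -> x ^+ (2 ^ d) = x -> x ^+ (2 ^ k) = x.
Proof.
move=> /dvdnP [j ->] h; elim: j => [|j IH]; first by rewrite mul0n expr1.
by rewrite mulSn expnD exprM h IH.
Qed.

Lemma C1 (F : finFieldType) (hc : 2%N \in [pchar F]) n (hn : (0 < n)%N)
  (hcard : #|F| = (2 ^ n)%N) k (lam a : F) (hl : lam != 0) (ha : a != 0) :
  lam ^+ (2 ^ k) * (a ^+ (2 ^ k)) ^+ (2 ^ k) + a ^+ (2 ^ k) + lam * a = 0 ->
  exists v0 : F, v0 ^+ (2 ^ gcdn k n) != v0 /\
    lam = v0 ^+ (2 ^ (2 * k) + 1) / (v0 + v0 ^+ (2 ^ k)) ^+ (2 ^ k + 1).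
Proof.
set q := (2 ^ k)%N.
have q0 : (0 < q)%N by rewrite expn_gt0.
set A := a ^+ q; set B := A ^+ q => hP.
have A0 : A != 0 by rewrite expf_neq0.
have hB : lam ^+ q * B = A + lam * a.
  by apply/eqP; rewrite -subr_eq0 opprD !oppr_pchar2 // addrA hP.
set t := lam * A / a.
set s := t ^+ (2 ^ n.-1).
have hs : s ^+ 2 = t.
  by rewrite /s -exprM -expnSr prednK // -(muln1 n) (frcard hcard).
set S := s ^+ q.
have hS : S ^+ 2 = lam ^+ q * B / A.
  by rewrite /S exprAC hs /t !expr_div_n exprMn.
have hlam : lam = s + S * s.
  apply: sq_inj => //; rewrite sqD // exprMn hS hs /t hB.
  apply: (char2E hc (z := - (lam * A / a))).
  field.
  by rewrite A0 ha.
have s0 : s != 0.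
  by apply: contraNneq hl => h0; rewrite hlam h0 mulr0 addr0.
have hsa : s = (1 + S) * A / a.
  apply: (mulfI s0); rewrite -expr2 hs /t {1}hlam; field; exact: ha.
have s1 : 1 + s != 0.
  apply: contraNneq hl => /eqP; rewrite addr_eq0 oppr_pchar2 // => /eqP hs1.
  by rewrite hlam /S -hs1 expr1n mulr1 addrr_pchar2.
have S1 : 1 + S != 0.
  by apply: contraNneq hl => h0; rewrite hlam -{1}(mul1r s) -mulrDl h0 mul0r.
have S0 : S != 0 by rewrite expf_neq0.
have hA : A = s * a / (1 + S).
  by rewrite hsa; field; rewrite S1 ha.
set v0 := ((1 + s) * a)^-1.
have hv1 : v0 ^+ q = (s * a)^-1.
  by rewrite /v0 exprVn exprMn frD // expr1n -/S -/A hA; congr (_^-1); field.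
have hv2 : (v0 ^+ q) ^+ q = (S * A)^-1.
  by rewrite hv1 exprVn exprMn.
have hform : lam = v0 ^+ (2 ^ (2 * k) + 1) / (v0 + v0 ^+ (2 ^ k)) ^+ (2 ^ k + 1).
  rewrite e2k !addn1 !exprSr exprM -/q frD // hv2 hv1.
  have h1 : (s * a)^-1 + (S * A)^-1 = (S * s * a)^-1.
    apply: (char2E hc (z := (s * a)^-1)); rewrite hA; field.
    by rewrite S1 S0 s0 ha.
  have h2 : v0 + (s * a)^-1 = (s * (1 + s) * a)^-1.
    apply: (char2E hc (z := ((1 + s) * a)^-1)); rewrite /v0; field.
    by rewrite s0 s1 ha.
  rewrite h1 h2 hA /v0 {1}hlam; field.
  by rewrite S1 S0 s0 s1 ha oner_eq0.
exists v0; split => //.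
apply/negP => /eqP h.
have := iterd (dvdn_gcdl k n) h; rewrite -/q => hq.
move: hl; rewrite hform hq addrr_pchar2 // expr0n !addn1 /= invr0 mulr0 eqxx.
by [].
Qed.
Theorem theorem2 (n k : nat) (hn : (1 <= n)%N) (hk : (1 <= k)%N)
  (F : finFieldType) (hchar : 2%N \in [pchar F]) (hcard : #|F| = (2 ^ n)%N)
  (alpha : 'I_n -> F) (hsd : self_dual alpha)
  (lambda : F) (hl : lambda != 0) :
  let d := gcdn k n in
  negabent alpha (fun x => Tr n (lambda * x ^+ (2 ^ k + 1)))
  <->
  ~ (exists v0 : F,
       v0 ^+ (2 ^ d) != v0 /\
       (let v1 := v0 ^+ (2 ^ k) in
        lambda = v0 ^+ (2 ^ (2 * k) + 1) / (v0 + v1) ^+ (2 ^ k + 1))).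
Proof.
move=> d; split.
- move=> hN [v0 [_ hlam]]; simpl in hlam.
  have [a [a0 hPa]] := C2 hchar hl hlam.
  have hW : Wf n k lambda a = 0.
    have := WfP hchar hn hcard k lambda a; rewrite hPa => /eqP.
    by rewrite expf_eq0 expn_gt0 /= => /eqP.
  by move: a0; rewrite (negB hchar hn hcard hsd hN hW) eqxx.
- move=> hno; apply: (negA hchar hn hcard hsd) => a hWa.
  apply/eqP; apply/negPn/negP => a0; apply: hno.
  have hP := WfP hchar hn hcard k lambda a.
  rewrite hWa expr0n expn_eq0 /= in hP.
  exact: (C1 hchar hn hcard hl a0 (esym hP)).
Qed.
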